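(* There is a constant $C_2>0$ such that for every $\ell\ge0$ and every path $p_0,p_1,\dots,p_\ell$ in the graph $G_1+G_2$, its $(G_1+G_2)$-weight $\prod_{i=1}^{\ell}(G_1+G_2)(p_{i-1},p_i)$ is at most $$C_2^{\,\ell+\max_{0\le i\le\ell}|p_i|}.$$
   Context: $\mathbb N=\{0,1,2,\dots\}$; for $t\in\mathbb R$, $\langle t\rangle:=1+|t|$. A directed weighted $\mathbb Z^2$-graph is a map $G\colon\mathbb Z^2\times\mathbb Z^2\to[0,\infty)$ ($G(p,q)$ = weight of edge $p\to q$, $0$ meaning no edge); a path of length $\ell$ is $p_0,\dots,p_\ell$ with $G(p_{i-1},p_i)>0$, and its $G$-weight is $\prod_{i=1}^\ell G(p_{i-1},p_i)$. The sum is $(G+G')(p,q)=G(p,q)+G'(p,q)$ and the product is $(G\cdot G')(p,q)=\sum_{r\in\mathbb Z^2}G(p,r)G'(r,q)$. $G_1$ is the graph whose only nonzero weights are: $G_1((k,h),(k-2,h+2))=\frac{\langle\max\{k,|h|\}\rangle}{\langle h\rangle}$ for $k\ge2$, $h\in\mathbb Z$; $G_1((k,h),(k,h))=1$ for $k\ge0$, $h\in\mathbb Z$; $G_1((k,h),(k+2,h-2))=\frac{\langle h\rangle}{\langle\max\{k,|h|\}\rangle}$ for $k\ge0$, $h\in\mathbb Z$. $G_2((k,h),(k',h'))=1$ if $k,k'\ge0$, $(k,h)\ne(k',h')$ and $(k'-k,h'-h)\in\{c_1(1,0)+c_2(-1,2): c_1,c_2\in\mathbb N\}$, and $G_2((k,h),(k',h'))=0$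 otherwise. *)

(* Defs.v *)
From Stdlib Require Import Reals ZArith Lia Lra ClassicalEpsilon.
Open Scope R_scope.

Definition bracket (t : R) : R := 1 + Rabs t.

Definition G1 (p q : Z * Z) : R :=
  let (k, h) := p in let (k', h') := q in
  (if (Z.eqb k' (k - 2) && Z.eqb h' (h + 2) && Z.leb 2 k)%bool
   then bracket (IZR (Z.max k (Z.abs h))) / bracket (IZR h) else 0)
  + (if (Z.eqb k' k && Z.eqb h' h && Z.leb 0 k)%bool then 1 else 0)
  + (if (Z.eqb k' (k + 2) && Z.eqb h' (h - 2) && Z.leb 0 k)%bool
     then bracket (IZR h) / bracket (IZR (Z.max k (Z.abs h))) else 0).

Definition G2_edge (p q : Z * Z) : Prop :=
  let (k, h) := p in let (k', h') := q in
  (0 <= k)%Z /\ (0 <= k')%Z /\ p <> q /\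
  exists c1 c2 : nat,
    (k' - k = Z.of_nat c1 * 1 + Z.of_nat c2 * (-1))%Z /\
    (h' - h = Z.of_nat c1 * 0 + Z.of_nat c2 * 2)%Z.

Definition G2 (p q : Z * Z) : R :=
  if excluded_middle_informative (G2_edge p q) then 1 else 0.

Definition Gsum (G G' : Z * Z -> Z * Z -> R) (p q : Z * Z) : R := G p q + G' p q.

(* A path p_0,...,p_l is encoded as p : nat -> Z*Z (values beyond l ignored). *)
Definition is_path (G : Z * Z -> Z * Z -> R) (p : nat -> Z * Z) (l : nat) : Prop :=
  forall i : nat, (1 <= i <= l)%nat -> G (p (i - 1)%nat) (p i) > 0.

Fixpoint path_weight (G : Z * Z -> Z * Z -> R) (p : nat -> Z * Z) (l : nat) : R :=
  match l with
  | O => 1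
  | S n => path_weight G p n * G (p n) (p (S n))
  end.

Definition pnorm (x : Z * Z) : R := sqrt (IZR (fst x) ^ 2 + IZR (snd x) ^ 2).

Fixpoint path_max (p : nat -> Z * Z) (l : nat) : R :=
  match l with
  | O => pnorm (p O)
  | S n => Rmax (path_max p n) (pnorm (p (S n)))
  end.

(* Main.v *)
Require Import Defs.
From Stdlib Require Import Reals ZArith Lia Lra ClassicalEpsilon.
Open Scope R_scope.

Definition Wt (s j : Z) : R := bracket (IZR (Z.max (s - j) (Z.abs j))) / bracket (IZR j).
Fixpoint P (s h : Z) (t : nat) : R :=
  match t with O => 1 | S t' => Wt s (h-2) * P s (h-2) t' end.
Fixpoint Dn (h : Z) (t : nat) : R :=
  match t with O => 1 | S t' => bracket (IZR (h-2)) * Dn (h-2) t' end.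
Definition Tn (N : nat) (h : Z) : nat := Z.to_nat ((h + Z.of_nat N)/2).
Definition Phi (N : nat) (x : Z*Z) : R := P (fst x + snd x) (snd x) (Tn N (snd x)).

Lemma bracket_IZR z : bracket (IZR z) = IZR (1 + Z.abs z).
Proof. unfold bracket. rewrite Rabs_Zabs, plus_IZR. reflexivity. Qed.

Lemma bracket_pos x : 0 < bracket x.
Proof. unfold bracket. pose proof (Rabs_pos x). lra. Qed.

Lemma div_ge1 a b : 0 < b -> b <= a -> 1 <= a / b.
Proof. intros. apply Rmult_le_reg_r with b; auto. unfold Rdiv.
  rewrite Rmult_assoc, Rinv_l by lra. lra. Qed.

Lemma Wt_ge1 s j : 1 <= Wt s j.
Proof. unfold Wt. apply div_ge1. apply bracket_pos.
  rewrite !bracket_IZR. apply IZR_le. lia. Qed.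

Lemma Wt_mono s s' j : (s <= s')%Z -> Wt s j <= Wt s' j.
Proof. intros. unfold Wt, Rdiv. apply Rmult_le_compat_r.
  left. apply Rinv_0_lt_compat, bracket_pos.
  rewrite !bracket_IZR. apply IZR_le. lia. Qed.

Lemma P_ge1 s t : forall h, 1 <= P s h t.
Proof. induction t; intros h; simpl. lra.
  pose proof (Wt_ge1 s (h-2)). pose proof (IHt (h-2)%Z). nra. Qed.

Lemma P_mono_s s s' t : (s <= s')%Z -> forall h, P s h t <= P s' h t.
Proof. intros Hs. induction t; intros h; simpl. lra.
  pose proof (Wt_ge1 s (h-2)). pose proof (IHt (h-2)%Z). pose proof (P_ge1 s t (h-2)).
  apply Rmult_le_compat; try lra. apply Wt_mono; auto. Qed.

Lemma P_step s h t : P s (h+2) (S t) = Wt s h * P s h t.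
Proof. simpl. replace (h+2-2)%Z with h by ring. reflexivity. Qed.

Lemma P_up s c : forall t h, P s h t <= P s (h + 2 * Z.of_nat c) (t + c).
Proof. induction c; intros t h.
  - simpl. rewrite Nat.add_0_r, Z.add_0_r. lra.
  - replace (h + 2 * Z.of_nat (S c))%Z with ((h + 2 * Z.of_nat c) + 2)%Z by lia.
    replace (t + S c)%nat with (S (t + c)) by lia.
    rewrite P_step. pose proof (IHc t h). pose proof (Wt_ge1 s (h + 2 * Z.of_nat c)).
    pose proof (P_ge1 s (t+c) (h + 2 * Z.of_nat c)). nra. Qed.

Lemma Tn_add N h c : (0 <= h + Z.of_nat N)%Z -> Tn N (h + 2 * Z.of_nat c) = (Tn N h + c)%nat.
Proof. intros. unfold Tn.
  replace (h + 2 * Z.of_nat c + Z.of_nat N)%Z with ((h + Z.of_nat N) + Z.of_nat c * 2)%Z by ring.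
  rewrite Z_div_plus by lia.
  assert (0 <= (h + Z.of_nat N)/2)%Z by (apply Z.div_pos; lia). lia. Qed.

Lemma Tn_succ N h : (0 <= h + Z.of_nat N)%Z -> Tn N (h + 2) = S (Tn N h).
Proof. intros. pose proof (Tn_add N h 1 H). simpl in H0.
  replace (h + 2 * 1)%Z with (h+2)%Z in H0 by ring. lia. Qed.

Lemma Dn_last t : forall h, Dn h (S t) = Dn h t * bracket (IZR (h - 2 * Z.of_nat (S t))).
Proof. induction t; intros h.
  - simpl. replace (h - 2)%Z with (h - 2 * 1)%Z by ring. ring.
  - change (Dn h (S (S t))) with (bracket (IZR (h-2)) * Dn (h-2) (S t)).
    rewrite IHt. change (Dn h (S t)) with (bracket (IZR (h-2)) * Dn (h-2) t).
    replace (h - 2 - 2 * Z.of_nat (S t))%Z with (h - 2 * Z.of_nat (S (S t)))%Z by lia. ring. Qed.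

Lemma bracket_ge z t : (Z.of_nat t <= Z.abs z)%Z -> 1 + INR t <= bracket (IZR z).
Proof. intros. rewrite bracket_IZR, INR_IZR_INZ, <- plus_IZR. apply IZR_le. lia. Qed.

Lemma Dn_lower t : forall h, INR (fact (S t)) / 2 ^ t <= Dn h t.
Proof. induction t; intros h.
  - simpl. lra.
  - assert (Hf : INR (fact (S (S t))) / 2 ^ S t = (INR t + 2) / 2 * (INR (fact (S t)) / 2 ^ t)).
    { change (fact (S (S t))) with (S (S t) * fact (S t))%nat. rewrite mult_INR.
      rewrite !S_INR. simpl. field. apply pow_nonzero. lra. }
    rewrite Hf.
    assert (HX : 0 <= INR (fact (S t)) / 2 ^ t).
    { apply Rmult_le_pos. apply pos_INR. left; apply Rinv_0_lt_compat, pow_lt; lra. }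
    pose proof (pos_INR t).
    destruct (Z_le_gt_dec (Z.of_nat t) (Z.abs (h-2))) as [Hc|Hc].
    + change (Dn h (S t)) with (bracket (IZR (h-2)) * Dn (h-2) t).
      pose proof (bracket_ge _ _ Hc). pose proof (IHt (h-2)%Z).
      apply Rmult_le_compat; lra.
    + rewrite Dn_last.
      assert (Hc' : (Z.of_nat t <= Z.abs (h - 2 * Z.of_nat (S t)))%Z) by lia.
      pose proof (bracket_ge _ _ Hc'). pose proof (IHt h).
      rewrite Rmult_comm. apply Rmult_le_compat; lra. Qed.

Lemma P_Dn (N : nat) s t : forall h, (s <= 2 * Z.of_nat N)%Z -> (h <= Z.of_nat N)%Z ->
  (- Z.of_nat N <= h - 2 * Z.of_nat t)%Z -> P s h t * Dn h t <= (1 + 3 * INR N) ^ t.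
Proof. induction t; intros h Hs Hh Hl.
  - simpl. lra.
  - change (P s h (S t) * Dn h (S t)) with
      (Wt s (h-2) * P s (h-2) t * (bracket (IZR (h-2)) * Dn (h-2) t)).
    assert (E : Wt s (h-2) * P s (h-2) t * (bracket (IZR (h-2)) * Dn (h-2) t)
       = bracket (IZR (Z.max (s - (h-2)) (Z.abs (h-2)))) * (P s (h-2) t * Dn (h-2) t)).
    { unfold Wt. field. pose proof (bracket_pos (IZR (h-2))). lra. }
    rewrite E. simpl.
    pose proof (IHt (h-2)%Z Hs ltac:(lia) ltac:(lia)).
    assert (B : bracket (IZR (Z.max (s - (h-2)) (Z.abs (h-2)))) <= 1 + 3 * INR N).
    { rewrite bracket_IZR, INR_IZR_INZ.
      replace (1 + 3 * IZR (Z.of_nat N)) with (IZR (1 + 3 * Z.of_nat N)) by (rewrite plus_IZR, mult_IZR; reflexivity).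
      apply IZR_le. lia. }
    apply Rmult_le_compat; auto.
    left; apply bracket_pos.
    apply Rmult_le_pos. pose proof (P_ge1 s t (h-2)). lra.
    pose proof (Dn_lower t (h-2)).
    assert (0 <= INR (fact (S t)) / 2 ^ t).
    { apply Rmult_le_pos. apply pos_INR. left; apply Rinv_0_lt_compat, pow_lt; lra. }
    lra. Qed.

Definition g (a : R) (t : nat) : R := (2 * a) ^ t / INR (fact (S t)).

Lemma fact_pos' n : 0 < INR (fact n).
Proof. apply lt_0_INR. apply lt_O_fact. Qed.

Lemma g_succ a u : g a (S u) = g a u * (2 * a / (INR u + 2)).
Proof. unfold g. change (fact (S (S u))) with (S (S u) * fact (S u))%nat.
  rewrite mult_INR, (S_INR (S u)), (S_INR u). simpl pow. pose proof (fact_pos' (S u)). pose proof (pos_INR u).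
  field. split; lra. Qed.

Lemma g_nonneg a t : 0 <= a -> 0 <= g a t.
Proof. intros. unfold g. apply Rmult_le_pos. apply pow_le; lra.
  left; apply Rinv_0_lt_compat, fact_pos'. Qed.

Lemma g_mono (N : nat) d : forall t, (t + d <= N)%nat -> g (1 + 3 * INR N) t <= g (1 + 3 * INR N) (t + d).
Proof. induction d; intros t H.
  - rewrite Nat.add_0_r. lra.
  - replace (t + S d)%nat with (S (t + d)) by lia. rewrite g_succ.
    pose proof (IHd t ltac:(lia)).
    pose proof (pos_INR N).
    pose proof (g_nonneg (1 + 3 * INR N) (t+d) ltac:(lra)).
    assert (INR (t + d) + 2 <= 2 * (1 + 3 * INR N)).
    { assert (INR (t+d) <= INR N) by (apply le_INR; lia). lra. }
    assert (1 <= 2 * (1 + 3 * INR N) / (INR (t + d) + 2)).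
    { apply div_ge1. pose proof (pos_INR (t+d)). lra. lra. }
    nra. Qed.

Lemma exp_pow x n : exp x ^ n = exp (INR n * x).
Proof. induction n. simpl. rewrite Rmult_0_l, exp_0. reflexivity.
  simpl pow. rewrite IHn, S_INR, <- exp_plus. f_equal. ring. Qed.

Lemma K n : INR n ^ n <= 3 ^ n * INR (fact n).
Proof. induction n.
  - simpl. lra.
  - change (fact (S n)) with (S n * fact n)%nat. rewrite mult_INR.
    simpl pow.
    destruct n as [|m].
    + simpl. lra.
    + assert (Hpos : 0 < INR (S m)) by (apply lt_0_INR; lia).
      assert (Hb : INR (S (S m)) ^ S m <= 3 * INR (S m) ^ S m).
      { replace (INR (S (S m))) with (INR (S m) * (1 + / INR (S m))) by (rewrite (S_INR (S m)); field; lra).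
        rewrite Rpow_mult_distr.
        assert ((1 + / INR (S m)) ^ S m <= 3).
        { apply Rle_trans with (exp (/ INR (S m)) ^ S m).
          apply pow_incr. split. pose proof (Rinv_0_lt_compat _ Hpos). lra.
          left. apply exp_ineq1. apply Rinv_neq_0_compat. lra.
          rewrite exp_pow. replace (INR (S m) * / INR (S m)) with 1 by (field; lra). apply exp_le_3. }
        pose proof (pow_lt _ (S m) Hpos). nra. }
      pose proof (pos_INR (S (S m))).
      apply Rle_trans with (INR (S (S m)) * (3 * INR (S m) ^ S m)).
      apply Rmult_le_compat_l; auto.
      apply Rle_trans with (INR (S (S m)) * (3 * (3 ^ S m * INR (fact (S m))))).
      apply Rmult_le_compat_l; auto. lra. right. ring. Qed.

Lemma g_top (N : nat) : g (1 + 3 * INR N) N <= 3 * 18 ^ N.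
Proof. unfold g.
  pose proof (pos_INR N).
  assert (H1 : (2 * (1 + 3 * INR N)) ^ N <= 6 ^ N * INR (S N) ^ N).
  { rewrite <- Rpow_mult_distr. apply pow_incr. rewrite S_INR. lra. }
  pose proof (K (S N)) as HK. change (INR (S N) ^ S N) with (INR (S N) * INR (S N) ^ N) in HK. change (3 ^ S N) with (3 * 3 ^ N) in HK.
  assert (HSN : 1 <= INR (S N)) by (rewrite S_INR; lra).
  pose proof (pow_le (INR (S N)) N ltac:(lra)).
  assert (H2 : INR (S N) ^ N <= 3 * 3 ^ N * INR (fact (S N))).
  { apply Rle_trans with (INR (S N) * INR (S N) ^ N). nra. exact HK. }
  pose proof (fact_pos' (S N)).
  apply Rle_trans with (6 ^ N * (3 * 3 ^ N * INR (fact (S N))) / INR (fact (S N))).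
  unfold Rdiv. apply Rmult_le_compat_r. left; apply Rinv_0_lt_compat; auto.
  apply Rle_trans with (6 ^ N * INR (S N) ^ N); auto.
  apply Rmult_le_compat_l. apply pow_le; lra. auto.
  right. replace 18 with (6 * 3) by ring. rewrite Rpow_mult_distr. field. lra. Qed.

Lemma Phi_bound (N : nat) k h : (Z.abs k <= Z.of_nat N)%Z -> (Z.abs h <= Z.of_nat N)%Z ->
  Phi N (k, h) <= 3 * 18 ^ N.
Proof. intros Hk Hh. unfold Phi. cbn [fst snd].
  assert (Ht : (Tn N h <= N)%nat /\ (- Z.of_nat N <= h - 2 * Z.of_nat (Tn N h))%Z).
  { unfold Tn. assert (0 <= (h + Z.of_nat N)/2)%Z by (apply Z.div_pos; lia).
    pose proof (Z.mul_div_le (h + Z.of_nat N) 2 ltac:(lia)).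
    assert ((h + Z.of_nat N)/2 <= Z.of_nat N)%Z by (apply Z.div_le_upper_bound; lia).
    lia. }
  destruct Ht as [Ht1 Ht2]. set (t := Tn N h) in *.
  pose proof (P_Dn N (k+h) t h ltac:(lia) ltac:(lia) Ht2) as HPD.
  pose proof (Dn_lower t h) as HD.
  pose proof (fact_pos' (S t)) as HF.
  assert (H2 : 0 < 2 ^ t) by (apply pow_lt; lra).
  pose proof (P_ge1 (k+h) t h) as HP.
  assert (HFq : 0 < INR (fact (S t)) / 2 ^ t) by (apply Rdiv_lt_0_compat; lra).
  assert (HA : P (k+h) h t <= g (1 + 3 * INR N) t).
  { unfold g. rewrite Rpow_mult_distr.
    assert (P (k+h) h t * (INR (fact (S t)) / 2 ^ t) <= (1 + 3 * INR N) ^ t).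
    { apply Rle_trans with (P (k + h) h t * Dn h t); auto. apply Rmult_le_compat_l; lra. }
    apply Rmult_le_reg_r with (INR (fact (S t)) / 2 ^ t); auto.
    replace (2 ^ t * (1 + 3 * INR N) ^ t / INR (fact (S t)) * (INR (fact (S t)) / 2 ^ t))
      with ((1 + 3 * INR N) ^ t) by (field; lra). auto. }
  pose proof (g_mono N (N - t) t ltac:(lia)).
  replace (t + (N - t))%nat with N in H by lia.
  pose proof (g_top N). lra. Qed.

Lemma frac_helper a b c d e : 0 < b -> 0 < d -> a * d <= e * c * b -> a / b <= e * (c / d).
Proof. intros. replace (a / b) with ((a * d) * / (b * d)) by (field; lra).
  replace (e * (c / d)) with ((e * c * b) * / (b * d)) by (field; lra).
  apply Rmult_le_compat_r; auto. left; apply Rinv_0_lt_compat; nra. Qed.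

Lemma Wt_back s h : Wt s (h-2) <= 9 * Wt s h.
Proof. unfold Wt. apply frac_helper; try apply bracket_pos.
  rewrite !bracket_IZR. rewrite <- !mult_IZR. apply IZR_le.
  assert (Z.abs (Z.max (s - (h-2)) (Z.abs (h-2))) <= 2 + Z.abs (Z.max (s - h) (Z.abs h)))%Z by lia.
  assert (1 + Z.abs h <= 3 * (1 + Z.abs (h-2)))%Z by lia.
  nia. Qed.

Lemma Phi_pos N x : 0 < Phi N x.
Proof. unfold Phi. pose proof (P_ge1 (fst x + snd x) (Tn N (snd x)) (snd x)). lra. Qed.

Lemma step N k h k' h' :
  (Z.abs k <= Z.of_nat N)%Z -> (Z.abs h <= Z.of_nat N)%Z ->
  (Z.abs k' <= Z.of_nat N)%Z -> (Z.abs h' <= Z.of_nat N)%Z ->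
  Gsum G1 G2 (k,h) (k',h') <= 36 * (Phi N (k',h') / Phi N (k,h)).
Proof. intros Hk Hh Hk' Hh'.
  pose proof (Phi_pos N (k,h)) as P0. pose proof (Phi_pos N (k',h')) as P1.
  set (r := Phi N (k',h') / Phi N (k,h)).
  assert (Hr : 0 <= r) by (left; apply Rdiv_lt_0_compat; auto).
  unfold Gsum, G1, G2, G2_edge.
  assert (T1 : (if ((k' =? k - 2)%Z && (h' =? h + 2)%Z && (2 <=? k)%Z)%bool
     then bracket (IZR (Z.max k (Z.abs h))) / bracket (IZR h) else 0) <= 9 * r).
  { destruct ((k' =? k - 2)%Z && (h' =? h + 2)%Z && (2 <=? k)%Z)%bool eqn:E; [|lra].
    apply andb_prop in E as [E E3]. apply andb_prop in E as [E1 E2].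
    apply Z.eqb_eq in E1, E2. apply Z.leb_le in E3. subst k' h'.
    assert (Hq : Phi N ((k-2)%Z, (h+2)%Z) = Wt (k+h)%Z h * Phi N (k,h)).
    { unfold Phi. cbn [fst snd]. replace (k - 2 + (h + 2))%Z with (k+h)%Z by ring.
      rewrite Tn_succ by lia. apply P_step. }
    unfold r. rewrite Hq. replace (Wt (k + h) h * Phi N (k, h) / Phi N (k, h)) with (Wt (k+h) h) by (field; lra).
    unfold Wt. replace (k + h - h)%Z with k by ring.
    pose proof (Wt_ge1 (k+h) h). unfold Wt in H. replace (k + h - h)%Z with k in H by ring. lra. }
  assert (T2 : (if ((k' =? k)%Z && (h' =? h)%Z && (0 <=? k)%Z)%bool then 1 else 0) <= 9 * r).
  { destruct ((k' =? k)%Z && (h' =? h)%Z && (0 <=? k)%Z)%bool eqn:E; [|lra].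
    apply andb_prop in E as [E E3]. apply andb_prop in E as [E1 E2].
    apply Z.eqb_eq in E1, E2. subst k' h'. unfold r.
    replace (Phi N (k, h) / Phi N (k, h)) with 1 by (field; lra). lra. }
  assert (T3 : (if ((k' =? k + 2)%Z && (h' =? h - 2)%Z && (0 <=? k)%Z)%bool
     then bracket (IZR h) / bracket (IZR (Z.max k (Z.abs h))) else 0) <= 9 * r).
  { destruct ((k' =? k + 2)%Z && (h' =? h - 2)%Z && (0 <=? k)%Z)%bool eqn:E; [|lra].
    apply andb_prop in E as [E E3]. apply andb_prop in E as [E1 E2].
    apply Z.eqb_eq in E1, E2. apply Z.leb_le in E3. subst k' h'.
    assert (Hq : Phi N (k,h) = Wt (k+h)%Z (h-2)%Z * Phi N ((k+2)%Z, (h-2)%Z)).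
    { unfold Phi. cbn [fst snd]. replace (k + 2 + (h - 2))%Z with (k+h)%Z by ring.
      assert (Et : Tn N h = S (Tn N (h-2))).
      { rewrite <- Tn_succ by lia. f_equal. ring. }
      rewrite Et. reflexivity. }
    unfold r. rewrite Hq.
    pose proof (Wt_back (k+h) h). pose proof (Wt_ge1 (k+h) h). pose proof (Wt_ge1 (k+h) (h-2)).
    replace (Phi N ((k + 2)%Z, (h - 2)%Z) / (Wt (k + h) (h - 2) * Phi N ((k + 2)%Z, (h - 2)%Z)))
      with (/ Wt (k + h) (h - 2)) by (field; lra).
    replace (bracket (IZR h) / bracket (IZR (Z.max k (Z.abs h)))) with (/ Wt (k+h) h).
    2:{ unfold Wt. replace (k + h - h)%Z with k by ring.
        pose proof (bracket_pos (IZR h)). pose proof (bracket_pos (IZR (Z.max k (Z.abs h)))).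
        field. lra. }
    apply Rmult_le_reg_l with (Wt (k + h) h * Wt (k+h) (h-2)). nra.
    replace (Wt (k + h) h * Wt (k + h) (h - 2) * / Wt (k + h) h) with (Wt (k+h) (h-2)) by (field; lra).
    replace (Wt (k + h) h * Wt (k + h) (h - 2) * (9 * / Wt (k + h) (h - 2))) with (9 * Wt (k+h) h) by (field; lra).
    auto. }
  assert (T4 : (if excluded_middle_informative
          ((0 <= k)%Z /\ (0 <= k')%Z /\ (k, h) <> (k', h') /\
           (exists c1 c2 : nat,
              (k' - k)%Z = (Z.of_nat c1 * 1 + Z.of_nat c2 * -1)%Z /\
              (h' - h)%Z = (Z.of_nat c1 * 0 + Z.of_nat c2 * 2)%Z))
         then 1 else 0) <= 9 * r).
  { destruct excluded_middle_informative as [E|E]; [|lra].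
    destruct E as (_ & _ & _ & c1 & c2 & E1 & E2).
    assert (Hle : Phi N (k,h) <= Phi N (k',h')).
    { unfold Phi. cbn [fst snd].
      replace h' with (h + 2 * Z.of_nat c2)%Z by lia.
      rewrite Tn_add by lia.
      apply Rle_trans with (P (k' + (h + 2 * Z.of_nat c2)) h (Tn N h)).
      apply P_mono_s. lia. apply P_up. }
    assert (1 <= r).
    { unfold r. apply div_ge1; auto. }
    lra. }
  lra. Qed.

Lemma div_nonneg a b : 0 < a -> 0 < b -> 0 <= a / b.
Proof. intros. left. apply Rdiv_lt_0_compat; auto. Qed.

Lemma Gsum_nonneg x y : 0 <= Gsum G1 G2 x y.
Proof. destruct x as [k h], y as [k' h']. unfold Gsum, G1, G2.
  assert (0 <= (if excluded_middle_informative (G2_edge (k, h) (k', h')) then 1 else 0)).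
  { destruct excluded_middle_informative; lra. }
  pose proof (div_nonneg _ _ (bracket_pos (IZR (Z.max k (Z.abs h)))) (bracket_pos (IZR h))).
  pose proof (div_nonneg _ _ (bracket_pos (IZR h)) (bracket_pos (IZR (Z.max k (Z.abs h))))).
  repeat match goal with |- context [if ?b then _ else _] =>
    lazymatch b with excluded_middle_informative _ => fail | _ => destruct b end end; lra. Qed.

Lemma pw_nonneg p m : 0 <= path_weight (Gsum G1 G2) p m.
Proof. induction m; simpl. lra. pose proof (Gsum_nonneg (p m) (p (S m))). nra. Qed.

Fixpoint zmax (p : nat -> Z * Z) (l : nat) : Z :=
  match l with
  | O => Z.max (Z.abs (fst (p O))) (Z.abs (snd (p O)))
  | S n => Z.max (zmax p n) (Z.max (Z.abs (fst (p (S n)))) (Z.abs (snd (p (S n)))))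
  end.

Lemma zmax_bound p l : forall i, (i <= l)%nat ->
  (Z.abs (fst (p i)) <= zmax p l)%Z /\ (Z.abs (snd (p i)) <= zmax p l)%Z.
Proof. induction l; intros i Hi; simpl.
  - assert (i = 0%nat) by lia. subst. lia.
  - destruct (Nat.eq_dec i (S l)). subst. lia.
    destruct (IHl i ltac:(lia)). lia. Qed.

Lemma zmax_nonneg p l : (0 <= zmax p l)%Z.
Proof. destruct l; simpl; lia. Qed.

Lemma pnorm_fst x : IZR (Z.abs (fst x)) <= pnorm x.
Proof. unfold pnorm. rewrite abs_IZR, <- sqrt_Rsqr_abs. apply sqrt_le_1_alt.
  unfold Rsqr. simpl. nra. Qed.
Lemma pnorm_snd x : IZR (Z.abs (snd x)) <= pnorm x.
Proof. unfold pnorm. rewrite abs_IZR, <- sqrt_Rsqr_abs. apply sqrt_le_1_alt.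
  unfold Rsqr. simpl. nra. Qed.

Lemma zmax_le p l : IZR (zmax p l) <= path_max p l.
Proof. induction l; simpl.
  - destruct (Z.max_spec (Z.abs (fst (p O))) (Z.abs (snd (p O)))) as [[_ E]|[_ E]]; rewrite E.
    apply pnorm_snd. apply pnorm_fst.
  - pose proof (pnorm_fst (p (S l))). pose proof (pnorm_snd (p (S l))).
    pose proof (Rmax_l (path_max p l) (pnorm (p (S l)))).
    pose proof (Rmax_r (path_max p l) (pnorm (p (S l)))).
    destruct (Z.max_spec (zmax p l) (Z.max (Z.abs (fst (p (S l)))) (Z.abs (snd (p (S l))))))
      as [[_ E]|[_ E]]; rewrite E.
    + destruct (Z.max_spec (Z.abs (fst (p (S l)))) (Z.abs (snd (p (S l))))) as [[_ E']|[_ E']];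
      rewrite E'; lra.
    + lra. Qed.

Lemma tele N p l : (forall i, (i <= l)%nat ->
  (Z.abs (fst (p i)) <= Z.of_nat N)%Z /\ (Z.abs (snd (p i)) <= Z.of_nat N)%Z) ->
  forall m, (m <= l)%nat ->
  path_weight (Gsum G1 G2) p m <= 36 ^ m * (Phi N (p m) / Phi N (p O)).
Proof. intros HB m. induction m; intros Hm.
  - simpl. pose proof (Phi_pos N (p O)). replace (Phi N (p 0%nat) / Phi N (p 0%nat)) with 1 by (field; lra). lra.
  - simpl path_weight. pose proof (IHm ltac:(lia)) as IH.
    destruct (HB m ltac:(lia)) as [A1 A2]. destruct (HB (S m) ltac:(lia)) as [B1 B2].
    destruct (p m) as [k h] eqn:Em. destruct (p (S m)) as [k' h'] eqn:Esm.
    cbn [fst snd] in *.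
    pose proof (step N k h k' h' A1 A2 B1 B2) as St.
    pose proof (pw_nonneg p m). pose proof (Gsum_nonneg (k,h) (k',h')).
    pose proof (Phi_pos N (k,h)). pose proof (Phi_pos N (k',h')). pose proof (Phi_pos N (p O)).
    apply Rle_trans with ((36 ^ m * (Phi N (k, h) / Phi N (p 0%nat))) * (36 * (Phi N (k', h') / Phi N (k, h)))).
    apply Rmult_le_compat; auto.
    right. simpl pow. field. split; lra. Qed.

Theorem mainTheorem10 :
  exists C2 : R, C2 > 0 /\
    forall (l : nat) (p : nat -> Z * Z),
      is_path (Gsum G1 G2) p l ->
      path_weight (Gsum G1 G2) p l <= Rpower C2 (INR l + path_max p l).
Proof.
  exists 108. split. lra. intros l p _.
  assert (HM0 : 0 <= path_max p l).
  { pose proof (zmax_le p l). pose proof (zmax_nonneg p l). apply IZR_le in H0. lra. }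
  destruct l as [|n].
  - simpl path_weight. simpl INR. rewrite Rplus_0_l.
    rewrite <- (Rpower_O 108) by lra. apply Rle_Rpower; lra.
  - set (N := Z.to_nat (zmax p (S n))).
    assert (HN : Z.of_nat N = zmax p (S n)) by (unfold N; rewrite Z2Nat.id; auto; apply zmax_nonneg).
    assert (HB : forall i, (i <= S n)%nat ->
      (Z.abs (fst (p i)) <= Z.of_nat N)%Z /\ (Z.abs (snd (p i)) <= Z.of_nat N)%Z).
    { intros i Hi. rewrite HN. apply zmax_bound; auto. }
    pose proof (tele N p (S n) HB (S n) ltac:(lia)) as T.
    assert (HN' : INR N <= path_max p (S n)).
    { rewrite INR_IZR_INZ, HN. apply zmax_le. }
    destruct (p (S n)) as [k h] eqn:E.
    destruct (HB (S n) ltac:(lia)) as [H1 H2]. rewrite E in H1, H2. cbn [fst snd] in H1, H2.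
    pose proof (Phi_bound N k h H1 H2) as PB.
    pose proof (Phi_pos N (k,h)).
    pose proof (P_ge1 (fst (p O) + snd (p O)) (Tn N (snd (p O))) (snd (p O))) as P0.
    fold (Phi N (p O)) in P0.
    assert (Hq : Phi N (k,h) / Phi N (p O) <= Phi N (k,h)).
    { unfold Rdiv. rewrite <- (Rmult_1_r (Phi N (k,h))) at 2. apply Rmult_le_compat_l. lra.
      rewrite <- Rinv_1. apply Rinv_le_contravar; lra. }
    assert (H36 : 0 < 36 ^ S n) by (apply pow_lt; lra).
    assert (Hfin : 36 ^ S n * (3 * 18 ^ N) <= 108 ^ (S n + N)).
    { rewrite pow_add. replace 108 with (36 * 3) at 1 by ring. rewrite Rpow_mult_distr.
      assert (3 <= 3 ^ S n).
      { simpl. pose proof (pow_R1_Rle 3 n ltac:(lra)). lra. }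
      assert (18 ^ N <= 108 ^ N) by (apply pow_incr; lra).
      pose proof (pow_lt 18 N ltac:(lra)).
      apply Rle_trans with ((36 ^ S n * 3 ^ S n) * 18 ^ N).
      { replace (36 ^ S n * (3 * 18 ^ N)) with ((36 ^ S n * 3) * 18 ^ N) by ring.
        apply Rmult_le_compat_r. lra. apply Rmult_le_compat_l; lra. }
      apply Rmult_le_compat_l. left. apply Rmult_lt_0_compat; auto. apply pow_lt; lra. auto. }
    rewrite <- (Rpower_pow (S n + N) 108) in Hfin by lra.
    apply Rle_trans with (36 ^ S n * (3 * 18 ^ N)).
    { apply Rle_trans with (36 ^ S n * (Phi N (k, h) / Phi N (p 0%nat))); auto.
      apply Rmult_le_compat_l; lra. }
    apply Rle_trans with (1 := Hfin). apply Rle_Rpower. lra.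
    rewrite plus_INR. lra. Qed.
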